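(* For $n\geqslant 3$ let $M_n$ be the maximum, over all pairs $(G,S)$ of caterpillar trees with $n$ leaves bijectively labeled by the same label set and with $G$ and $S$ of different labeled topologies, of the number of coalescent histories for $(G,S)$. Then $M_n\sim C_{n-1}$ as $n\to\infty$, where $C_m=\frac{1}{m+1}\binom{2m}{m}$.
   Context: All trees are binary, rooted, leaf-labeled. A caterpillar tree is one in which some internal node is descended from all other internal nodes. For a caterpillar with $n$ leaves, internal nodes are numbered $1,\dots,n-1$ from the cherry (internal node with exactly two descendant leaves) to the root, and internal edge $i$ is the edge immediately above node $i$, with an extra edge $n-1$ above the root. A coalescent history for a gene tree $G$ and species tree $S$ is a map $h$ from internal nodes of $G$ to internal edges of $S$ such that (1) every label of a leaf below node $v$ of $G$ labels a leaf of $S$ below edge $h(v)$, and (2) if $v_2$ is descended from $v_1$ in $G$ then $h(v_2)$ is descended from $h(v_1)$ in $S$ (objects are descended from themselves). $a_n\sim b_n$ means $a_n/b_n\to 1$. *)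

(* Defs.v *)
From HB Require Import structures.
From mathcomp Require Import all_boot all_order all_algebra all_fingroup.
From mathcomp Require Import all_classical all_reals all_analysis.
Set Implicit Arguments. Unset Strict Implicit. Unset Printing Implicit Defensive.
Import Order.TTheory GRing.Theory Num.Theory.

(* A caterpillar with n leaves labeled by 'I_n is encoded by a permutation
   s : {perm 'I_n}: leaves s 0, s 1 form the cherry, and internal node k
   (1 <= k <= n-1, numbered from the cherry to the root) has as descendant
   leaves exactly {s 0, ..., s k}.  Every labeled caterpillar arises this way. *)

(* leaf set below internal node k (equivalently below internal edge k) *)
Definition clade (n : nat) (s : {perm 'I_n}) (k : nat) : {set 'I_n} :=
  [set s j | j : 'I_n & (j <= k)%N].

(* two caterpillars have the same labeled topology iff they have the same
   clades at every internal node *)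
Definition same_topology (n : nat) (g s : {perm 'I_n}) : bool :=
  [forall k : 'I_n, (1 <= k)%N ==> (clade g k == clade s k)].

(* Coalescent histories.  Internal nodes of G and internal edges of S are
   numbered 1..n-1; an element i : 'I_n.-1 stands for number i+1. *)
Definition is_history (n : nat) (g s : {perm 'I_n})
    (h : {ffun 'I_n.-1 -> 'I_n.-1}) : bool :=
  [forall i : 'I_n.-1, clade g i.+1 \subset clade s (h i).+1] &&
  [forall i1 : 'I_n.-1, forall i2 : 'I_n.-1,
      (i2 <= i1)%N ==> (h i2 <= h i1)%N].

Definition num_histories (n : nat) (g s : {perm 'I_n}) : nat :=
  #|[set h : {ffun 'I_n.-1 -> 'I_n.-1} | is_history g s h]|.

Definition M (n : nat) : nat :=
  \max_(p : {perm 'I_n} * {perm 'I_n} | ~~ same_topology p.1 p.2)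
     num_histories p.1 p.2.

Definition catalan {R : realType} (m : nat) : R :=
  ('C(m.*2, m))%:R / (m.+1)%:R.

(* Main.v *)
Require Import Defs.
From HB Require Import structures.
From mathcomp Require Import all_boot all_order all_algebra all_fingroup.
From mathcomp Require Import all_classical all_reals all_analysis.
From mathcomp Require Import zify ring lra.
Set Implicit Arguments. Unset Strict Implicit. Unset Printing Implicit Defensive.
Import Order.TTheory GRing.Theory Num.Theory.
Import numFieldNormedType.Exports.

Local Open Scope nat_scope.

Definition Pz (j w : nat) : int :=
  (('C(w + j + 1, j))%:Z - (if j is j'.+1 then 'C(w + j + 1, j') else 0)%:Z)%R.

Lemma Pz_rec j w : j <= w ->
  Pz j.+1 w = (Pz j w + (if (j < w)%N then Pz j.+1 w.-1 else 0))%R.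
Proof.
move=> jw; rewrite /Pz; case: ltnP => jw'.
  case: w jw jw' => [|w] // jw jw' /=.
  have e1 : w.+1 + j.+1 + 1 = (w + j + 2).+1 by lia.
  have e2 : w.+1 + j + 1 = w + j + 2 by lia.
  have e3 : w + j.+1 + 1 = w + j + 2 by lia.
  rewrite e1 e2 e3 binS.
  case: j {jw jw' e1 e2 e3} => [|j]; rewrite ?bin0 ?binS; lia.
have -> : w = j by lia.
have e1 : j + j.+1 + 1 = (j + j + 1).+1 by lia.
rewrite e1 binS.
have e2 : 'C(j + j + 1, j.+1) = 'C(j + j + 1, j).
  rewrite -[in RHS](@bin_sub (j + j + 1) j); last lia. by congr binomial; lia.
rewrite e2; case: j {jw jw' e1 e2} => [|j]; rewrite ?bin0 ?binS; lia.
Qed.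

Section Comb.
Variable p : nat.
Local Notation m := p.+1.
Local Notation T := {ffun 'I_p.+1 -> 'I_p.+1}.

Definition mono (h : T) := [forall i1 : 'I_p.+1, forall i2 : 'I_p.+1,
      (i2 <= i1)%N ==> (h i2 <= h i1)%N].

Definition Sset c k v : {set T} := [set h : T | [&& mono h,
  [forall i : 'I_m, (i < c)%N ==> (h i == i :> nat)],
  [forall i : 'I_m, ((c <= i) && (i < k))%N ==> ((i <= h i) && (h i <= v))%N] &
  [forall i : 'I_m, (k <= i)%N ==> (h i == p :> nat)]]].

Lemma leqp (x : 'I_m) : (x <= p)%N. Proof. by rewrite -ltnS ltn_ord. Qed.

Lemma monoP (h : T) : reflect (forall i j : 'I_m, i <= j -> h i <= h j) (mono h).
Proof.
apply: (iffP forallP) => [H i j ij | H i].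
  by move/forallP: (H j) => /(_ i) /implyP; apply.
by apply/forallP => j; apply/implyP; exact: H.
Qed.

Lemma inS (h : T) c k v : h \in Sset c k v <->
  [/\ (forall i j : 'I_m, i <= j -> h i <= h j),
      (forall i : 'I_m, i < c -> nat_of_ord (h i) = i),
      (forall i : 'I_m, c <= i -> i < k -> i <= h i /\ h i <= v) &
      (forall i : 'I_m, k <= i -> nat_of_ord (h i) = p)].
Proof.
rewrite inE; split.
  case/and4P => /monoP H1 /forallP H2 /forallP H3 /forallP H4; split => //.
  - by move=> i /(implyP (H2 i)) /eqP.
  - by move=> i ci ik; have /andP := implyP (H3 i) (introT andP (conj ci ik)).
  - by move=> i /(implyP (H4 i)) /eqP.
case=> H1 H2 H3 H4; apply/and4P; split.
- exact/monoP.
- by apply/forallP => i; apply/implyP => /H2 ->.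
- by apply/forallP => i; apply/implyP => /andP [ci ik]; case: (H3 i ci ik) => -> ->.
- by apply/forallP => i; apply/implyP => /H4 ->.
Qed.

Lemma cardS0 c v : #|Sset c c v| = 1.
Proof.
pose h0 : T := [ffun i : 'I_m => if (i < c)%N then i else ord_max].
rewrite (_ : Sset c c v = [set h0]%SET) ?cards1 //; apply/setP => h.
rewrite finset.in_set1; apply/idP/eqP.
  move/inS => [H1 H2 H3 H4]; apply/ffunP => i; apply: val_inj; change (nat_of_ord (h i) = nat_of_ord (h0 i)); rewrite ffunE.
  by case: ltnP => ic; [rewrite H2 | rewrite H4].
move=> ->; apply/inS; split => [i j ij||i ci ik|i ci]; rewrite ?ffunE.
- have := ltn_ord i; have := ltn_ord j.
  by case: (ltnP i c) => ic; case: (ltnP j c) => jc /= *; lia.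
- by move=> i ic; rewrite ffunE ic.
- lia.
- by rewrite ltnNge ci.
Qed.


Lemma cardS_rec c k v (Hk : k < m) (Hv : v < m) : c <= k -> k <= v ->
  #|Sset c k.+1 v| = #|Sset c k v| + (if k < v then #|Sset c k.+1 v.-1| else 0).
Proof.
move=> ck kv.
pose kk : 'I_m := Ordinal Hk. pose vv : 'I_m := Ordinal Hv.
pose B := [set h : T | nat_of_ord (h kk) == v].
rewrite -(cardsID B (Sset c k.+1 v)); congr (_ + _).
  pose phi (h : T) : T := [ffun i => if nat_of_ord i == k then ord_max else h i].
  pose psi (h : T) : T := [ffun i => if nat_of_ord i == k then vv else h i].
  have phiS : {in Sset c k.+1 v :&: B, forall h, phi h \in Sset c k v}.
    move=> h /setIP [/inS [H1 H2 H3 H4]]; rewrite finset.inE => /eqP Hb.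
    apply/inS; split.
    - move=> i j ij; rewrite !ffunE; case: eqP => ei; case: eqP => ej /=.
      + by [].
      + by rewrite H4 //; lia.
      + exact: leqp.
      + exact: H1.
    - move=> i ic; rewrite ffunE; case: eqP => [ei|_]; [lia | exact: H2].
    - move=> i ci ik; rewrite ffunE; case: eqP => [ei|_]; [lia | apply: H3 => //; lia].
    - move=> i ki; rewrite ffunE; case: eqP => [ei|ei] //; apply: H4; lia.
  have psiS : {in Sset c k v, forall h, psi h \in Sset c k.+1 v :&: B}.
    move=> h /inS [H1 H2 H3 H4]; rewrite finset.in_setI; apply/andP; split; last first.
      by rewrite finset.inE ffunE /= eqxx.
    apply/inS; split.
    - move=> i j ij; rewrite !ffunE; case: eqP => ei; case: eqP => ej /=.
      + by [].
      + by rewrite H4 //; lia.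
      + case: (ltnP i c) => ic; first by rewrite H2 //; lia.
        by have [] := H3 i ic (ltac:(lia)).
      + exact: H1.
    - move=> i ic; rewrite ffunE; case: eqP => [ei|_]; [lia | exact: H2].
    - move=> i ci ik; rewrite ffunE; case: eqP => [ei|ne] /=; [rewrite /vv /=; lia | apply: H3 => //; lia].
    - move=> i ki; rewrite ffunE; case: eqP => [ei|ei]; [lia | apply: H4; lia].
  have phipsi : {in Sset c k v, forall h, phi (psi h) = h}.
    move=> h /inS [H1 H2 H3 H4]; apply/ffunP => i; rewrite !ffunE.
    case: eqP => ei //; apply: val_inj; change (nat_of_ord (ord_max : 'I_m) = nat_of_ord (h i)); rewrite H4 /=; lia.
  have psiphi : {in Sset c k.+1 v :&: B, forall h, psi (phi h) = h}.
    move=> h /setIP [_]; rewrite finset.inE => /eqP Hb; apply/ffunP => i; rewrite !ffunE.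
    case: eqP => ei //; apply: val_inj => /=; rewrite -Hb; congr (val (h _)); exact: val_inj.
  rewrite -(card_in_imset (f := phi)); last first.
    by move=> x y Hx Hy E; rewrite -(psiphi x Hx) -(psiphi y Hy) E.
  apply: eq_card => h; apply/imsetP/idP => [[h' H' ->]|Hh]; first exact: phiS.
  by exists (psi h); [exact: psiS | rewrite phipsi].
case: ltnP => kv'.
  apply: eq_card => h; apply/idP/idP => [/setDP [/inS [H1 H2 H3 H4]]|/inS [H1 H2 H3 H4]].
    rewrite finset.inE => Hb; apply/inS; split => // i ci ik.
    have [] := H3 i ci ik; have := H1 i kk (ltac:(rewrite /=; lia)).
    have [] := H3 kk (ltac:(rewrite /=; lia)) (ltac:(rewrite /=; lia)).
    move: Hb => /eqP; lia.
  apply/setDP; split; last first.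
    rewrite finset.inE; have [] := H3 kk (ltac:(rewrite /=; lia)) (ltac:(rewrite /=; lia)).
    move=> _ /=; lia.
  apply/inS; split => // i ci ik; have [] := H3 i ci ik; lia.
apply/eqP; rewrite cards_eq0; apply/eqP/setP => h; rewrite finset.in_set0.
apply/negbTE/negP => /setDP [/inS [H1 H2 H3 H4]]; rewrite finset.inE.
have [] := H3 kk (ltac:(rewrite /=; lia)) (ltac:(rewrite /=; lia)).
move=> /= ? ?; apply/negP/negPn/eqP; lia.
Qed.


Lemma cardS c j w : c + j <= m -> j <= w.+1 -> c + w <= p ->
  Posz #|Sset c (c + j) (c + w)| = Pz j w.
Proof.
elim: j w => [|j IHj] w h1 h2 h3.
  by rewrite addn0 cardS0 /Pz /= bin0.
elim: w h2 h3 => [|w IHw] h2 h3.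
  have j0 : j = 0 by lia.
  subst j; rewrite addnS (@cardS_rec c (c + 0) (c + 0)) ?ltnn ?addn0 //; try lia.
  by rewrite cardS0 /Pz.
rewrite addnS (@cardS_rec c (c + j) (c + w.+1)) //; try lia.
rewrite ltn_add2l Pz_rec; last by lia.
rewrite PoszD -IHj; try lia.
case: ltnP => jw //. have -> : (c + w.+1).-1 = c + w by lia. by rewrite -addnS IHw //; lia.
Qed.

End Comb.

Lemma card_le (n k : nat) : k < n -> #|[set j : 'I_n | j <= k]| = k.+1.
Proof.
move=> kn.
have -> : [set j : 'I_n | j <= k] = (widen_ord kn) @: [set: 'I_k.+1].
  apply/setP => j; rewrite finset.inE; apply/idP/imsetP => [jk|[j' _ ->]].
    by exists (Ordinal (jk : j < k.+1)) => //; apply: val_inj.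
  by rewrite /= -ltnS.
rewrite card_imset ?cardsT ?card_ord //.
by move=> x y /(congr1 val) /= /val_inj.
Qed.

Lemma card_clade n (g : {perm 'I_n}) k : k < n -> #|clade g k| = k.+1.
Proof.
move=> kn; rewrite /clade card_imset; last exact: perm_inj.
by rewrite -(card_le kn); apply: eq_card => j; rewrite finset.inE.
Qed.

Lemma mem_clade1 n k (x : 'I_n) : (x \in clade 1 k) = (x <= k).
Proof.
apply/imsetP/idP => [[j Hj ->]|Hx]; first by rewrite perm1; move: Hj; rewrite finset.inE.
by exists x; rewrite ?perm1 // finset.inE.
Qed.

Section Bounds.
Variable p : nat.
Local Notation m := p.+1.
Local Notation T := {ffun 'I_p.+1 -> 'I_p.+1}.

Lemma hist_le (g s : {perm 'I_p.+2}) : num_histories g s <= #|Sset p 0 p.+1 p|.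
Proof.
rewrite /num_histories; apply: subset_leq_card; apply/fintype.subsetP => h.
rewrite finset.inE => /andP [/forallP H1 H2]; apply/inS; split.
- exact/monoP.
- by move=> i; rewrite ltn0.
- move=> i _ _; split; last exact: leqp.
  by have := subset_leq_card (H1 i); rewrite !card_clade ?ltnS ?leqp.
- by move=> i; rewrite ltnNge leqp.
Qed.

Lemma M_le : M p.+2 <= #|Sset p 0 p.+1 p|.
Proof. by apply/bigmax_leqP => pp _; exact: hist_le. Qed.

Lemma ord_eq_inord (i : 'I_m) a : nat_of_ord i = a -> i = inord a.
Proof. by move=> <-; rewrite inord_val. Qed.

Section Lower.
Variable a : nat.
Hypothesis ha : a < p.

Let x : 'I_p.+2 := inord a.+1.
Let y : 'I_p.+2 := inord a.+2.
Let g : {perm 'I_p.+2} := tperm x y.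
Let Bset : {set T} := [set h : T | nat_of_ord (h (inord a)) == a].

Lemma xE : nat_of_ord x = a.+1. Proof. by rewrite /x inordK //; lia. Qed.
Lemma yE : nat_of_ord y = a.+2. Proof. by rewrite /y inordK //; lia. Qed.

Lemma not_same : ~~ same_topology g 1.
Proof.
apply/forallPn; exists x; rewrite negb_imply xE /=; apply/eqP => E.
have : x \in clade 1 a.+1 by rewrite mem_clade1 xE.
rewrite -E => /imsetP [j]; rewrite finset.inE => Hj E2.
have : j = y by rewrite -(tpermK x y j) /g -E2 tpermL.
move=> Ej; move: Hj; rewrite Ej; have := yE; lia.
Qed.

Lemma auxF (u v a' : nat) : u = a' -> u <= v -> v != a' -> a' < v. Proof. lia. Qed.

Lemma tperm_bound (i hv : nat) (j : 'I_p.+2) : i <= hv -> (i = a -> a < hv) ->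
  j <= i.+1 -> tperm x y j <= hv.+1.
Proof.
move=> H1 H2 H3; case: (tpermP x y j) => [E|E|_ _]; rewrite ?xE ?yE //.
- move: H3; rewrite E xE; lia.
- move: H3; rewrite E yE; lia.
- lia.
Qed.

Lemma hist_ge : #|Sset p 0 p.+1 p :\: Bset| <= num_histories g 1.
Proof.
rewrite /num_histories; apply: subset_leq_card; apply/fintype.subsetP => h.
move=> /setDP [/inS [H1 H2 H3 H4]]; rewrite finset.inE => Hb.
rewrite finset.inE; apply/andP; split; last exact/monoP.
apply/forallP => i; apply/fintype.subsetP => z /imsetP [j]; rewrite finset.inE => Hj ->.
rewrite mem_clade1.
have [hi _] := H3 i (leq0n _) (ltn_ord i).
have F : nat_of_ord i = a -> a < h i.
  by move=> ia; have Ei := ord_eq_inord ia; move: Hb; rewrite -Ei; exact: auxF ia hi.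
exact: (tperm_bound hi F Hj).
Qed.

Lemma fix_le : #|Sset p 0 p.+1 p :&: Bset| <= #|Sset p 0 a.+1 a| * #|Sset p a.+1 p.+1 p|.
Proof.
have am : a < m by lia.
have aE : nat_of_ord (inord a : 'I_m) = a by rewrite inordK.
pose pre (h : T) : T := [ffun i => if nat_of_ord i <= a then h i else ord_max].
pose post (h : T) : T := [ffun i => if nat_of_ord i <= a then i else h i].
rewrite -cardsX -(card_in_imset (f := fun h => (pre h, post h))); last first.
  move=> h1 h2 _ _ [E1 E2]; apply/ffunP => i.
  have := congr1 (fun f : T => f i) E1; have := congr1 (fun f : T => f i) E2.
  by rewrite !ffunE; case: leqP.
apply: subset_leq_card; apply/fintype.subsetP => z /imsetP [h /setIP [/inS [H1 H2 H3 H4]]].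
rewrite finset.inE => /eqP Hb ->; rewrite finset.in_setX; apply/andP; split; apply/inS; split.
- move=> i j ij; rewrite !ffunE; case: (leqP (nat_of_ord i) a) => ia; case: (leqP (nat_of_ord j) a) => ja /=.
  + exact: H1 ij.
  + exact: leqp.
  + lia.
  + by [].
- by move=> i; rewrite ltn0.
- move=> i _ ia; rewrite ffunE (_ : i <= a) ?ltnS //; split.
    by have [] := H3 i (leq0n _) (ltn_ord i).
  by rewrite -Hb; apply: H1; rewrite aE.
- by move=> i ai; rewrite ffunE leqNgt ai.
- move=> i j ij; rewrite !ffunE; case: (leqP (nat_of_ord i) a) => ia; case: (leqP (nat_of_ord j) a) => ja /=.
  + by [].
  + by have [] := H3 j (leq0n _) (ltn_ord j); lia.
  + lia.
  + exact: H1 ij.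
- by move=> i ia; rewrite ffunE (_ : i <= a) ?ltnS //.
- move=> i ai im; rewrite ffunE ifN; last by rewrite -ltnNge.
  split; last exact: leqp.
  by have [] := H3 i (leq0n _) (ltn_ord i).
- by move=> i; rewrite ltnNge leqp.
Qed.

Lemma M_ge : #|Sset p 0 p.+1 p| - #|Sset p 0 a.+1 a| * #|Sset p a.+1 p.+1 p| <= M p.+2.
Proof.
rewrite -(cardsID Bset (Sset p 0 p.+1 p)).
apply: leq_trans (_ : #|Sset p 0 p.+1 p :\: Bset| <= _).
  by have := fix_le; lia.
apply: leq_trans hist_ge _.
by apply: (@leq_bigmax_cond _ _ (fun pp => num_histories pp.1 pp.2) (g, 1%g)); exact: not_same.
Qed.

End Lower.
End Bounds.

Lemma binS2 J : 'C(J.+1.*2, J.+1) * J.+1 = 2 * (2 * J + 1) * 'C(J.*2, J).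
Proof.
have E1 := mul_bin_diag J.+1.*2 J.
have E2 := mul_bin_diag (J.*2.+1) J.
have E3 : 'C(J.*2.+1, J.+1) = 'C(J.*2.+1, J).
  rewrite -[in RHS](@bin_sub (J.*2.+1) J); last lia. by congr binomial; lia.
rewrite E3 /= in E2.
have E1' : 'C(J.+1.*2, J.+1) * J.+1 = (J.*2.+2) * 'C(J.*2.+1, J).
  by rewrite mulnC -E1 doubleS.
apply/eqP; rewrite -(eqn_pmul2r (ltn0Sn J)) E1'.
move: E2; set W := 'C(J.*2.+1, J); set X := 'C(J.*2, J) => E2. apply/eqP.  nia.
Qed.

Lemma bin_ub J : 'C(J.*2, J) ^ 2 * (3 * J + 1) <= 16 ^ J.
Proof.
elim: J => [|J IH]; first by rewrite bin0.
set X := 'C(J.*2, J) in IH *; set Y := 'C(J.+1.*2, J.+1).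
have E := binS2 J; rewrite -/X -/Y in E.
rewrite -(leq_pmul2r (_ : 0 < J.+1 ^ 2)) ?expn_gt0 //.
have -> : Y ^ 2 * (3 * J.+1 + 1) * J.+1 ^ 2 = (Y * J.+1) ^ 2 * (3 * J + 4).
  by rewrite !expnMn; ring.
rewrite E (expnS 16).
have H : 4 * (2 * J + 1) ^ 2 * (3 * J + 4) <= 16 * (3 * J + 1) * J.+1 ^ 2 by nia.
apply: leq_trans (_ : 16 * (X ^ 2 * (3 * J + 1)) * J.+1 ^ 2 <= _); last first.
  by apply: leq_mul => //; apply: leq_mul.
have -> : (2 * (2 * J + 1) * X) ^ 2 * (3 * J + 4) = (4 * (2 * J + 1) ^ 2 * (3 * J + 4)) * X ^ 2.
  by ring.
have -> : 16 * (X ^ 2 * (3 * J + 1)) * J.+1 ^ 2 = (16 * (3 * J + 1) * J.+1 ^ 2) * X ^ 2.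
  by ring.
by rewrite leq_mul2r H orbT.
Qed.

Lemma bin_lb J : 0 < J -> 16 ^ J <= 'C(J.*2, J) ^ 2 * (4 * J).
Proof.
elim: J => [//|J IH] _.
case: J IH => [|J] IH; first by [].
have {}IH := IH isT.
set X := 'C(J.+1.*2, J.+1) in IH *; set Y := 'C(J.+2.*2, J.+2).
have E := binS2 J.+1; rewrite -/X -/Y in E.
rewrite -(leq_pmul2r (_ : 0 < J.+2 ^ 2)) ?expn_gt0 //.
have -> : Y ^ 2 * (4 * J.+2) * J.+2 ^ 2 = (Y * J.+2) ^ 2 * (4 * J.+2).
  by rewrite !expnMn; ring.
rewrite E (expnS 16).
have H : 16 * (4 * J.+1) * J.+2 ^ 2 <= 4 * (2 * J.+1 + 1) ^ 2 * (4 * J.+2) by nia.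
apply: leq_trans (_ : 16 * (X ^ 2 * (4 * J.+1)) * J.+2 ^ 2 <= _).
  by apply: leq_mul => //; apply: leq_mul.
have -> : (2 * (2 * J.+1 + 1) * X) ^ 2 * (4 * J.+2) = (4 * (2 * J.+1 + 1) ^ 2 * (4 * J.+2)) * X ^ 2.
  by ring.
have -> : 16 * (X ^ 2 * (4 * J.+1)) * J.+2 ^ 2 = (16 * (4 * J.+1) * J.+2 ^ 2) * X ^ 2.
  by ring.
by rewrite leq_mul2r H orbT.
Qed.

Lemma key q u : 0 < q -> q + u + 1 <= 2 * (q + 1) -> q + u + 1 <= 2 * (u + 1) ->
  'C(q.*2, q) ^ 2 * 'C(u.*2, u) ^ 2 * (q + u + 1) ^ 3 <=
  256 * (q + 1) ^ 2 * (u + 1) ^ 2 * 'C((q + u).*2, q + u) ^ 2.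
Proof.
move=> q0 hq hu.
set X := 'C(q.*2, q); set Y := 'C(u.*2, u); set Z := 'C((q + u).*2, q + u).
set s := q + u + 1.
have A : X ^ 2 * Y ^ 2 * ((3 * q + 1) * (3 * u + 1)) <= 16 ^ (q + u).
  rewrite expnD; have := leq_mul (bin_ub q) (bin_ub u); rewrite -/X -/Y.
  by apply: leq_trans; rewrite eq_leq //; ring.
have B : 16 ^ (q + u) <= Z ^ 2 * (4 * (q + u)).
  by apply: bin_lb; lia.
have G1 : s ^ 4 <= 16 * (q + 1) ^ 2 * (u + 1) ^ 2.
  rewrite (_ : 16 * (q + 1) ^ 2 * (u + 1) ^ 2 =
    (2 * (q + 1)) * (2 * (q + 1)) * ((2 * (u + 1)) * (2 * (u + 1)))); last by ring.
  rewrite (_ : s ^ 4 = s * s * (s * s)); last by ring.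
  by apply: leq_mul; apply: leq_mul.
have G2 : s ^ 2 <= 4 * ((3 * q + 1) * (3 * u + 1)).
  apply: leq_trans (_ : (2 * (q + 1)) * (2 * (u + 1)) <= _).
    by rewrite (_ : s ^ 2 = s * s); [apply: leq_mul | ring].
  rewrite (_ : 2 * (q + 1) * (2 * (u + 1)) = 4 * ((q + 1) * (u + 1))); last by ring.
  by rewrite leq_mul2l /=; apply: leq_mul; lia.
have G3 : 4 * (q + u) * s ^ 3 <= 4 * s ^ 6.
  have s3 : q + u <= s ^ 3.
    apply: leq_trans (_ : s <= _); first by rewrite /s addn1.
    have -> : s ^ 3 = s * (s * s) by ring.
    by rewrite leq_pmulr // muln_gt0 /s addn1.
  rewrite (_ : 4 * s ^ 6 = 4 * s ^ 3 * s ^ 3); last by ring.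
  by apply: leq_mul => //; apply: leq_mul.
rewrite -(@leq_pmul2r ((3 * q + 1) * (3 * u + 1))) ?muln_gt0 ?addn1 //.
apply: leq_trans (_ : 16 ^ (q + u) * s ^ 3 <= _).
  rewrite (_ : X ^ 2 * Y ^ 2 * s ^ 3 * ((3 * q).+1 * (3 * u).+1) =
     X ^ 2 * Y ^ 2 * ((3 * q + 1) * (3 * u + 1)) * s ^ 3); last by rewrite !addn1; ring.
  exact: leq_mul.
apply: leq_trans (_ : Z ^ 2 * (4 * (q + u) * s ^ 3) <= _).
  by rewrite mulnA leq_mul.
apply: leq_trans (_ : Z ^ 2 * (4 * s ^ 6) <= _); first by rewrite leq_mul.
rewrite (_ : 4 * s ^ 6 = 4 * (s ^ 4 * s ^ 2)); last by ring.
rewrite (_ : 256 * q.+1 ^ 2 * u.+1 ^ 2 * Z ^ 2 * ((3 * q).+1 * (3 * u).+1) =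
  Z ^ 2 * (4 * ((16 * (q + 1) ^ 2 * (u + 1) ^ 2) * (4 * ((3 * q + 1) * (3 * u + 1))))));
  last by rewrite !addn1; ring.
by apply: leq_mul => //; apply: leq_mul => //; apply: leq_mul.
Qed.

Local Open Scope ring_scope.

Section Real.
Variable R : realType.

Lemma catalan_gt0 k : 0 < catalan k :> R.
Proof. by rewrite /catalan divr_gt0 // ltr0n bin_gt0 -addnn leq_addr. Qed.

Lemma PzC J : ((Pz J.+1 J)%:~R : R) = catalan J.+1.
Proof.
rewrite /Pz /catalan (_ : (J + J.+1 + 1)%N = J.+1.*2); last by lia.
have E := mul_bin_left J.+1.*2 J.
rewrite (_ : (J.+1.*2 - J)%N = J.+2) in E; last by lia.
rewrite mulrzBr -!pmulrn.
set a := 'C(J.+1.*2, J.+1) in E *; set b := 'C(J.+1.*2, J) in E *.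
have Eb : (b%:R : R) = J.+1%:R * a%:R / J.+2%:R.
  apply: (mulIf (_ : J.+2%:R != 0 :> R)); first by rewrite pnatr_eq0.
  by rewrite mulfVK ?pnatr_eq0 // -!natrM E mulnC.
rewrite Eb; field.
have -> : 2 + J%:R = J.+2%:R :> R by rewrite -[J.+2]addn2 natrD addrC.
by rewrite pnatr_eq0.
Qed.


Lemma cardR p c j w : (c + j <= p.+1)%N -> (j <= w.+1)%N -> (c + w <= p)%N ->
  (#|Sset p c (c + j) (c + w)|)%:R = ((Pz j w)%:~R : R).
Proof. by move=> h1 h2 h3; rewrite pmulrn cardS. Qed.

Lemma Mbounds p : (0 < p)%N ->
  (catalan p.+1 : R) - catalan (p.+1)./2 * catalan (p.+1 - (p.+1)./2) <= (M p.+2)%:R /\ (M p.+2)%:R <= (catalan p.+1 : R).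
Proof.
move=> p0.
set q := (p.+1)./2; set u := (p.+1 - q)%N.
have q0 : (0 < q)%N by rewrite /q; lia.
set a := q.-1.
have ha : (a < p)%N by rewrite /a /q; lia.
have c0 : (#|Sset p 0 p.+1 p|)%:R = (catalan p.+1 : R).
  by have := @cardR p 0 p.+1 p; rewrite !add0n => ->; rewrite ?PzC.
have c1 : (#|Sset p 0 a.+1 a|)%:R = (catalan q : R).
  have := @cardR p 0 a.+1 a; rewrite !add0n => ->; try lia.
  by rewrite PzC /a prednK.
have c2 : (#|Sset p a.+1 p.+1 p|)%:R = (catalan u : R).
  have := @cardR p a.+1 (p - a - 1).+1 (p - a - 1).
  rewrite (_ : (a.+1 + (p - a - 1).+1)%N = p.+1); last by lia.
  rewrite (_ : (a.+1 + (p - a - 1))%N = p); last by lia.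
  move=> ->; try lia.
  by rewrite PzC (_ : u = (p - a - 1).+1) // /u /a /q; lia.
split.
  have := M_ge ha; rewrite -/a => H.
  have H' : (#|Sset p 0 p.+1 p| <= M p.+2 + #|Sset p 0 a.+1 a| * #|Sset p a.+1 p.+1 p|)%N by lia.
  rewrite -c0 -c1 -c2 -natrM lerBlDr -natrD ler_nat //.
by rewrite -c0 ler_nat M_le.
Qed.


Lemma alg (A B C D E F : R) : C != 0 -> D != 0 -> E != 0 -> F != 0 ->
  ((A / D) * (B / E) / (C / F)) ^+ 2 * F = A ^+ 2 * B ^+ 2 * F ^+ 3 / (D ^+ 2 * E ^+ 2 * C ^+ 2).
Proof. by move=> hC hD hE hF; field; rewrite hC hD hE hF. Qed.

Lemma rbound q u : (0 < q)%N -> (q + u + 1 <= 2 * (q + 1))%N -> (q + u + 1 <= 2 * (u + 1))%N ->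
  ((catalan q : R) * catalan u / catalan (q + u)) ^+ 2 * (q + u).+1%:R <= 256.
Proof.
move=> q0 hq hu; have K := key q0 hq hu.
rewrite !addn1 in K.
have KR := K; rewrite -(ler_nat R) !natrM in KR.
rewrite /catalan alg ?pnatr_eq0 //; last by rewrite -lt0n bin_gt0 -addnn leq_addr.
rewrite ler_pdivrMr; last by rewrite !mulr_gt0 ?exprn_gt0 ?ltr0n // bin_gt0 -addnn leq_addr.
apply: (le_trans KR); rewrite le_eqVlt; apply/orP; left; apply/eqP.
ring.
Qed.

End Real.


Local Open Scope classical_set_scope.
Local Open Scope ring_scope.

Theorem corollary3 (R : realType) :
  (fun n : nat => (M n)%:R / (catalan n.-1 : R)) @ \oo --> (1 : R).
Proof.
apply/cvgrPdist_le => e e0.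
pose t := Num.Def.truncn (256 / e ^+ 2).
exists t.+3 => // n /= Nn.
case: n Nn => [|[|p]] // Nn /=.
have p0 : (0 < p)%N by lia.
have [lo hi] := Mbounds R p0.
set q := (p.+1)./2 in lo; set u := (p.+1 - q)%N in lo.
have q0 : (0 < q)%N by rewrite /q; lia.
have hr := @rbound R q u q0 (ltac:(rewrite /u /q; lia)) (ltac:(rewrite /u /q; lia)).
rewrite (_ : (q + u)%N = p.+1) in hr; last by rewrite /u /q; lia.
set C := catalan p.+1 in lo hi hr *.
set r := catalan q * catalan u / C in hr.
have Cpos : 0 < C := catalan_gt0 R p.+1.
have cq := catalan_gt0 R q; have cu := catalan_gt0 R u.
have r0 : 0 <= r by rewrite /r divr_ge0 // mulr_ge0 // ltW.
have f1 : 0 <= 1 - (M p.+2)%:R / C by rewrite subr_ge0 ler_pdivrMr // mul1r.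
have f2 : 1 - (M p.+2)%:R / C <= r.
  rewrite /r (_ : 1 - (M p.+2)%:R / C = (C - (M p.+2)%:R) / C); last by field; rewrite gt_eqF.
  by rewrite ler_pM2r ?invr_gt0 // lerBlDr addrC -lerBlDr.
have tb := truncnS_gt (256 / e ^+ 2); rewrite -/t in tb.
have tp : (t.+1%:R : R) <= p.+2%:R by rewrite ler_nat; lia.
have e2 : 0 < e ^+ 2 by rewrite exprn_gt0.
have big : 256 < e ^+ 2 * p.+2%:R.
  by rewrite mulrC -ltr_pdivrMr //; apply: lt_le_trans tb tp.
have re : r <= e.
  have P0 : 0 < (p.+2%:R : R) by rewrite ltr0n.
  set P := (p.+2%:R : R) in hr big P0 tp.
  nra.
by rewrite ger0_norm //; apply: le_trans f2 re.
Qed.
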